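(* Let $H$ be an undirected connected planarly embedded graph whose perimeter is a simple polygonal curve, such that all interior vertices have degree at least 6 and all interior faces are triangles. For a boundary vertex $x\in\partial H$ let $\deg(x)\ge 2$ denote its degree. Then $$\sum_{x\in\partial H}\max(4-\deg(x),0)\ge 6.$$ *)

(* Defs.v *)
(* A planarly embedded connected graph is encoded
   combinatorially as a rotation system (combinatorial map):
   - darts D (one dart per edge-direction, i.e. edge-vertex incidence),
   - alpha : fixed-point-free involution pairing the two darts of an edge,
   - sigma : rotation of darts around their common vertex (the embedding).
   Faces are the orbits of phi := sigma \o alpha; planarity (genus 0) of a
   connected map is Euler's formula V - E + F = 2. *)
From mathcomp Require Import all_boot all_fingroup.

Set Implicit Arguments.
Unset Strict Implicit.
Unset Printing Implicit Defensive.

Section RotationSystem.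
Variables (D : finType) (alpha sigma : {perm D}).

Definition phi (x : D) : D := sigma (alpha x).

Definition vertex_of (x : D) : {set D} := [set y | fconnect sigma x y].
Definition edge_of (x : D) : {set D} := [set y | fconnect alpha x y].
Definition face_of (x : D) : {set D} := [set y | fconnect phi x y].

Definition vertices : {set {set D}} := [set vertex_of x | x : D].
Definition edges : {set {set D}} := [set edge_of x | x : D].
Definition faces : {set {set D}} := [set face_of x | x : D].

(* degree of a vertex = number of incident darts (= neighbours, graph simple) *)
Definition deg (v : {set D}) : nat := #|v|.

Definition edge_involution : Prop :=
  forall x, alpha (alpha x) = x /\ alpha x != x.

Definition map_connected : Prop :=
  forall x y, connect [rel a b | (b == alpha a) || (b == sigma a)] x y.

(* the underlying graph is simple: no loops, no multiple edges *)
Definition simple_graph : Prop :=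
  (forall x, alpha x \notin vertex_of x) /\
  (forall x y, y \in vertex_of x -> x != y ->
     vertex_of (alpha x) != vertex_of (alpha y)).

Definition planar : Prop := #|vertices| + #|faces| = #|edges| + 2.

Definition outer_face (d0 : D) : {set D} := face_of d0.

Definition simple_perimeter (d0 : D) : Prop :=
  3 <= #|outer_face d0| /\ {in outer_face d0 &, injective vertex_of}.

Definition interior_faces_triangles (d0 : D) : Prop :=
  forall x, x \notin outer_face d0 -> #|face_of x| = 3.

Definition boundary_vertices (d0 : D) : {set {set D}} :=
  [set vertex_of x | x in outer_face d0].

Definition interior_deg_ge6 (d0 : D) : Prop :=
  forall x, vertex_of x \notin boundary_vertices d0 -> 6 <= deg (vertex_of x).

End RotationSystem.

(* Main.v *)
Require Import Defs.
From mathcomp Require Import all_boot all_fingroup.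
From mathcomp Require Import zify.

Set Implicit Arguments.
Unset Strict Implicit.
Unset Printing Implicit Defensive.

Lemma orbit_set_eq (T : finType) (f : T -> T) (injf : injective f) (x y : T) :
  fconnect f x y -> [set z | fconnect f x z] = [set z | fconnect f y z].
Proof.
move=> cxy; apply/setP => z; rewrite !inE.
apply/idP/idP => h.
- by apply: connect_trans h; rewrite fconnect_sym.
- exact: connect_trans cxy h.
Qed.

Lemma orbit_partition (T : finType) (f : T -> T) (injf : injective f) :
  partition [set [set y | fconnect f x y] | x : T] [set: T].
Proof.
have -> : [set [set y | fconnect f x y] | x : T] =
          equivalence_partition (fconnect f) [set: T].
  rewrite /equivalence_partition; apply/setP => A.
  by apply/imsetP/imsetP => -[x _ ->]; exists x => //; apply/setP => y; rewrite !inE.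
apply: equivalence_partitionP => x y z _ _ _; split; first exact: connect0.
move=> cxy; apply/idP/idP => h.
- by apply: connect_trans h; rewrite fconnect_sym.
- exact: connect_trans cxy h.
Qed.

Lemma orbit_sum (T : finType) (f : T -> T) (injf : injective f) :
  #|T| = \sum_(A in [set [set y | fconnect f x y] | x : T]) #|A|.
Proof. by rewrite -cardsT; apply: card_partition; apply: orbit_partition. Qed.

Theorem lemma8p1 (D : finType) (alpha sigma : {perm D}) (d0 : D) :
  edge_involution alpha ->
  map_connected alpha sigma ->
  simple_graph alpha sigma ->
  planar alpha sigma ->
  simple_perimeter alpha sigma d0 ->
  interior_faces_triangles alpha sigma d0 ->
  interior_deg_ge6 alpha sigma d0 ->
  6 <= \sum_(v in boundary_vertices alpha sigma d0) (4 - deg v).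
Proof.
move=> inv _ _ pl [n3 injv] tri ge6.
have injphi : injective (phi alpha sigma).
  by move=> x y; rewrite /phi => /perm_inj /perm_inj.
set F0 := outer_face alpha sigma d0.
set B := boundary_vertices alpha sigma d0.
set V := vertices sigma.
have sumV : #|D| = \sum_(v in V) deg v := orbit_sum (@perm_inj _ sigma).
have BV : B \subset V.
  by apply/subsetP => v /imsetP [x _ ->]; apply/imsetP; exists x.
have cardB : #|B| = #|F0| by rewrite card_in_imset.
have splitV : \sum_(v in V) deg v = \sum_(v in B) deg v + \sum_(v in V :\: B) deg v.
  by rewrite (big_setID B) /= (setIidPr BV).
have Si : 6 * #|V :\: B| <= \sum_(v in V :\: B) deg v.
  rewrite mulnC -sum_nat_const; apply: leq_sum => v; rewrite inE => /andP [vB /imsetP [x _ vx]].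
  by rewrite vx; apply: ge6; rewrite -vx.
have cardV : #|V| = #|B| + #|V :\: B|.
  by rewrite -(cardsID B V) (setIidPr BV).
have edge2 : forall x, edge_of alpha x = [set x; alpha x].
  move=> x; apply/setP => y; rewrite !inE; apply/idP/idP.
  - move=> /iter_findex <-; elim: (findex _ _ _) => [|k IH] /=; first by rewrite eqxx.
    case/orP: IH => /eqP ->; last by rewrite (proj1 (inv x)) eqxx.
    by rewrite eqxx orbT.
  - by case/orP => /eqP ->; [exact: connect0 | exact: fconnect1].
have sumE : #|D| = \sum_(A in edges alpha) #|A| := orbit_sum (@perm_inj _ alpha).
have Ecount : #|D| = 2 * #|edges alpha|.
  rewrite sumE mulnC -sum_nat_const; apply: eq_bigr => A /imsetP [x _ ->].
  by rewrite -/(edge_of alpha x) edge2 cards2 eq_sym (proj2 (inv x)).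
have sumF : #|D| = \sum_(A in faces alpha sigma) #|A| := orbit_sum injphi.
have F0in : F0 \in faces alpha sigma by apply/imsetP; exists d0.
have Fcount : #|D| = #|F0| + 3 * (#|faces alpha sigma| - 1).
  rewrite sumF (bigD1 F0) //=; congr (_ + _).
  rewrite (cardsD1 F0 (faces _ _)) F0in add1n subSS subn0 mulnC -sum_nat_const.
  rewrite [RHS](eq_bigl (fun A => (A \in faces alpha sigma) && (A != F0))); last first.
    by move=> A; rewrite !inE andbC.
  apply: eq_bigr => A /andP [/imsetP [x _ ->] neq].
  apply: tri; apply/negP => xF; apply/negP: neq; apply/negPn/eqP.
  rewrite /F0 /outer_face /face_of; by apply/esym/orbit_set_eq => //; rewrite inE in xF.
have sub4 : 4 * #|B| <= \sum_(v in B) (4 - deg v) + \sum_(v in B) deg v.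
  rewrite -big_split /= mulnC -sum_nat_const; apply: leq_sum => v _; lia.
have F1 : 1 <= #|faces alpha sigma| by rewrite (cardD1 F0) F0in.
move: pl; rewrite /planar -/V => pl.
lia.
Qed.
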